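(* Fix integers $D\ge1$, $\bar L\ge1$, a probability law $P_L$ on $\{1,\dots,\bar L\}$, and measurable weight functions $g_\nu:\{1,\dots,L\}\times\mathbb R^L\to[0,\infty)$ (for each $L$) such that for every $k^*\in\mathbb R^D$, every $L$ and every $\epsilon$, $x\mapsto g_\nu(\epsilon,\frac1{\sqrt D}xk^* )\prod_{\ell=1}^L\mathcal N(x_\ell;0,I_D)$ is a probability density on $\mathbb R^{L\times D}$. Assume there is a constant $c_\nu\ge 0$ such that for all $L$, all $\epsilon,\epsilon'\in\{1,\dots,L\}$ and all $\chi\in\mathbb R^L$, $$\frac{g_\nu(\epsilon,\chi)}{g_\nu(\epsilon',\chi)}=e^{c_\nu(\chi_\epsilon-\chi_{\epsilon'})}.$$ Let $k^*,v^*\in\mathbb R^D$ be arbitrary and generate $(L,\epsilon^*,X,y)$ by: $L\sim P_L$; $\epsilon^*\sim\mathrm{Unif}(\{1,\dots,L\})$ given $L$; $X\in\mathbb R^{L\times D}$ with density $g_\nu(\epsilon^*,\frac1{\sqrt D}xk^* )\prod_{\ell}\mathcal N(x_\ell;0,I_D)$ given $(L,\epsilon^* )$; and $y=\frac1{\sqrt D}X_{\epsilon^*}v^*$. For $k,v\in\mathbb R^D$ define the softmax attention predictor $f_{k,v}(X)=\mathrm{softmax}(\chi)^\top z$ with $\chi=\frac1{\sqrt D}Xk\in\mathbb R^L$, $z=\frac1{\sqrt D}Xv\in\mathbb R^L$ and $\mathrm{softmax}(\chi)_\ell=e^{\chi_\ell}/\sum_{\ell'=1}^Le^{\chi_{\ell'}}$.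 Then $$\min_{(k,v)\in(\mathbb R^D)^2}\mathbb E\big[(y-f_{k,v}(X))^2\big]=\mathbb E\big[(y-\mathbb E[y\mid X,L,k^*,v^*])^2\big],$$ where both expectations are over $(L,\epsilon^*,X)$ with $k^*,v^*$ fixed; i.e. the softmax attention class attains the Bayes risk.
   Context: $\mathcal N(x;\omega,V)$ is the Gaussian density. The condition on $g_\nu$ holds for instance for the spiked model $g_\nu(\epsilon,\chi)=e^{\sqrt\nu\chi_\epsilon-\nu/2}$ and the maximum-correlation model $g_\nu(\epsilon,\chi)=Le^{\nu\chi_\epsilon}/\sum_\ell e^{\nu\chi_\ell}$. *)

(* Defs.v *)
From HB Require Import structures.
From mathcomp Require Import all_boot all_order all_algebra.
From mathcomp Require Import all_classical all_reals all_analysis.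
Set Implicit Arguments. Unset Strict Implicit. Unset Printing Implicit Defensive.
Import Order.TTheory GRing.Theory Num.Theory.
Local Open Scope classical_set_scope.
Local Open Scope ring_scope.

Section Defs.
Variable R : realType.

(* Lebesgue integral over R^n of a [0,+oo]-valued function, written as the
   iterated integral over the coordinates 0..n-1 (by Tonelli this is the
   Lebesgue integral on R^n for nonnegative measurable integrands). *)
Fixpoint iter_int (n : nat) (F : (nat -> R) -> \bar R) : \bar R :=
  match n with
  | 0 => F (fun _ => 0)
  | n'.+1 => (\int[@lebesgue_measure R]_(t in [set: R])
               iter_int n' (fun v => F (fun k => if k == n' then t else v k)))%E
  end.

Definition mat_int (L D : nat) (F : 'M[R]_(L, D) -> \bar R) : \bar R :=
  iter_int (L * D) (fun v => F (\matrix_(i < L, j < D) v (i * D + j)%N)).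

Definition gauss_mat (L D : nat) (X : 'M[R]_(L, D)) : R :=
  \prod_(i < L) \prod_(j < D) normal_pdf 0 1 (X i j).

Definition attn_proj (L D : nat) (X : 'M[R]_(L, D)) (k : 'cV[R]_D) : 'cV[R]_L :=
  (Num.sqrt (D%:R))^-1 *: (X *m k).

Definition softmax (L : nat) (chi : 'cV[R]_L) : 'cV[R]_L :=
  \col_(l < L) (expR (chi l 0) / \sum_(l' < L) expR (chi l' 0)).

Definition attn (L D : nat) (k v : 'cV[R]_D) (X : 'M[R]_(L, D)) : R :=
  \sum_(l < L) softmax (attn_proj X k) l 0 * attn_proj X v l 0.

Definition target (L D : nat) (eps : 'I_L) (vstar : 'cV[R]_D) (X : 'M[R]_(L, D)) : R :=
  attn_proj X vstar eps 0.

Variable D Lbar : nat.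
Variable PL : nat -> R.
Variable g : forall L : nat, 'I_L -> 'cV[R]_L -> R.
Variable kstar vstar : 'cV[R]_D.

Definition dens (L : nat) (eps : 'I_L) (X : 'M[R]_(L, D)) : R :=
  g eps (attn_proj X kstar) * gauss_mat X.

Definition joint (L : nat) (eps : 'I_L) (X : 'M[R]_(L, D)) : R :=
  PL L * L%:R^-1 * dens eps X.

(* E[h(L,eps,X)] for h >= 0, over L ~ P_L on {1..Lbar}, eps ~ Unif, X ~ dens *)
Definition expect (h : forall L : nat, 'I_L -> 'M[R]_(L, D) -> R) : \bar R :=
  (\sum_(1 <= L < Lbar.+1)
     \sum_(eps < L) mat_int (fun X => (joint eps X * h L eps X)%:E))%E.

(* E[y | X, L] via Bayes' rule: posterior of eps given (X, L) *)
Definition cond_exp_y (L : nat) (X : 'M[R]_(L, D)) : R :=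
  \sum_(eps < L) (joint eps X / \sum_(e < L) joint e X) * target eps vstar X.

Definition risk (k v : 'cV[R]_D) : \bar R :=
  expect (fun L eps X => (target eps vstar X - attn k v X) ^+ 2).

Definition bayes_risk : \bar R :=
  expect (fun L eps X => (target eps vstar X - cond_exp_y X) ^+ 2).

End Defs.

(* Main.v *)
Require Import Defs.
From HB Require Import structures.
From mathcomp Require Import all_boot all_order all_algebra.
From mathcomp Require Import all_classical all_reals all_analysis.
From mathcomp Require Import measurable_realfun.
From mathcomp Require Import ring lra.
Import Order.TTheory GRing.Theory Num.Theory.
Local Open Scope classical_set_scope.
Local Open Scope ring_scope.


Section Machinery.
Variable R : realType.
Local Open Scope ereal_scope.

Fixpoint J (n : nat) : forall d (T : measurableType d), (T -> (nat -> R) -> \bar R) -> Prop :=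
  match n with
  | 0 => fun d T F => measurable_fun [set: T] (fun x => F x (fun _ => 0%R))
  | n'.+1 => fun d T F => @J n' _ (T * R)%type
      (fun p v => F p.1 (fun k => if k == n' then p.2 else v k))
  end.
Arguments J n {d T} F.

Lemma iter_ge0 n (F : (nat -> R) -> \bar R) : (forall v, 0 <= F v) -> 0 <= iter_int n F.
Proof.
elim: n F => [|n IH] F F0 /=; first exact: F0.
by apply: integral_ge0 => t _; apply: IH => v; exact: F0.
Qed.

Lemma iter_meas n : forall d (T : measurableType d) (F : T -> (nat -> R) -> \bar R),
  (forall x v, 0 <= F x v) -> J n F -> measurable_fun setT (fun x => iter_int n (F x)).
Proof.
elim: n => [|n IH] d T F F0 JF /=; first exact: JF.
have mG := IH _ _ _ (fun p v => F0 p.1 _) JF.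
change (measurable_fun setT (fubini_F (@lebesgue_measure R) (fun p : T * R => iter_int n (fun v => F p.1 (fun k => if k == n then p.2 else v k))))).
apply: measurable_fun_fubini_tonelli_F => //.
by move=> p; apply: iter_ge0.
Qed.

Lemma iter_add n : forall d (T : measurableType d) (F G : T -> (nat -> R) -> \bar R),
  (forall x v, 0 <= F x v) -> (forall x v, 0 <= G x v) -> J n F -> J n G ->
  forall x, iter_int n (fun v => F x v + G x v) = iter_int n (F x) + iter_int n (G x).
Proof.
elim: n => [|n IH] d T F G F0 G0 JF JG x //=.
rewrite -ge0_integralD //.
- apply: eq_integral => t _.
  exact: (IH _ _ (fun p v => F p.1 _) (fun p v => G p.1 _) (fun p v => F0 p.1 _)
     (fun p v => G0 p.1 _) JF JG (x, t)).
- by move=> t _; apply: iter_ge0 => v; exact: F0.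
- have := @iter_meas n _ _ _ (fun p v => F0 p.1 _) JF.
  by move/(measurable_fun_pair2 x).
- by move=> t _; apply: iter_ge0 => v; exact: G0.
- have := @iter_meas n _ _ _ (fun p v => G0 p.1 _) JG.
  by move/(measurable_fun_pair2 x).
Qed.

Definition ext n (s : n.-tuple R) : nat -> R :=
  fun k => if (k < n)%N then nth 0%R s k else 0%R.
Arguments ext {n}.

Lemma measurable_rcons d (T : measurableType d) n :
  measurable_fun [set: (T * R) * n.-tuple R]
    (fun q => (q.1.1, rcons_tuple q.2 q.1.2)).
Proof.
apply: measurable_fun_pair => /=.
  exact: (measurableT_comp measurable_fst measurable_fst).
apply/measurable_fun_tnthP => i /=.
have [lt|ge] := ltnP i n.
- rewrite (_ : _ \o _ = (fun q : (T * R) * n.-tuple R => tnth q.2 (Ordinal lt))).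
    exact: (measurableT_comp (measurable_tnth _) measurable_snd).
  apply/funext => q /=; rewrite !(tnth_nth 0%R) /= nth_rcons size_tuple lt //.
- rewrite (_ : _ \o _ = (fun q : (T * R) * n.-tuple R => q.1.2)).
    exact: (measurableT_comp measurable_snd measurable_fst).
  apply/funext => q /=; rewrite !(tnth_nth 0%R) /= nth_rcons size_tuple ltnNge ge /=.
  have /eqP -> : nat_of_ord i == n by rewrite eqn_leq ge -ltnS ltn_ord.
  by rewrite eqxx.
Qed.

Lemma Jt_J n : forall d (T : measurableType d) (F : T -> (nat -> R) -> \bar R),
  measurable_fun [set: T * n.-tuple R] (fun p => F p.1 (ext p.2)) -> J n F.
Proof.
elim: n => [|n IH] d T F mF /=.
  have := measurable_fun_pair1 [tuple] mF.
  by rewrite /ext /=.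
apply: IH => /=.
have := measurableT_comp mF (@measurable_rcons _ T n).
congr measurable_fun; apply/funext => q /=; congr (F _ _).
apply/funext => k; rewrite /ext nth_rcons size_tuple ltnS leq_eqVlt.
by case: eqP => [->|]; rewrite ?ltnn ?eqxx //= => _; case: ltnP.
Qed.


Lemma iter0 n : iter_int n (fun _ => (0:R)%:E) = 0.
Proof.
elim: n => [|n IH] //=.
by under eq_integral do rewrite IH; exact: integral0.
Qed.

Lemma iter_add' n (F G : (nat -> R) -> R) :
  (forall v, (0 <= F v)%R) -> (forall v, (0 <= G v)%R) ->
  measurable_fun [set: n.-tuple R] (fun s => F (ext s)) ->
  measurable_fun [set: n.-tuple R] (fun s => G (ext s)) ->
  iter_int n (fun v => (F v + G v)%:E) = iter_int n (fun v => (F v)%:E) + iter_int n (fun v => (G v)%:E).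
Proof.
move=> F0 G0 mF mG.
have := @iter_add n _ R (fun _ v => (F v)%:E) (fun _ v => (G v)%:E) _ _ _ _ 0%R.
apply.
- by move=> _ v; rewrite lee_fin.
- by move=> _ v; rewrite lee_fin.
- apply: Jt_J => /=; apply/measurable_EFinP.
  exact: (measurableT_comp mF measurable_snd).
- apply: Jt_J => /=; apply/measurable_EFinP.
  exact: (measurableT_comp mG measurable_snd).
Qed.

Lemma iter_sum n m (f : 'I_m -> (nat -> R) -> R) :
  (forall i v, (0 <= f i v)%R) ->
  (forall i, measurable_fun [set: n.-tuple R] (fun s => f i (ext s))) ->
  iter_int n (fun v => (\sum_(i < m) f i v)%:E) = \sum_(i < m) iter_int n (fun v => (f i v)%:E).
Proof.
elim: m f => [|m IH] f f0 mf.
  rewrite big_ord0; under eq_fun do rewrite big_ord0; exact: iter0.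
rewrite big_ord_recr /=; under eq_fun do rewrite big_ord_recr /=.
rewrite iter_add' //.
- by rewrite IH.
- by move=> v; apply: sumr_ge0 => i _.
- by apply: measurable_sum => i.
Qed.

End Machinery.


Section Meas.
Variable R : realType.
Variables (L D : nat).
Context d (T : measurableType d) (h : T -> 'M[R]_(L, D)).
Hypothesis hm : forall i j, measurable_fun [set: T] (fun x => h x i j).

Lemma minv (f : T -> R) : measurable_fun setT f -> (forall x, 0 < f x) ->
  measurable_fun setT (fun x => (f x)^-1).
Proof.
move=> mf f0.
rewrite (_ : (fun x => (f x)^-1) = (fun x => expR (- ln (f x)))); last first.
  by apply/funext => x; rewrite expRN lnK // posrE.
have h1 := (measurableT_comp (@measurable_ln R) mf).
have h2 := (measurableT_comp (@oppr_measurable R setT) h1).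
exact: (measurableT_comp (@measurable_expR R) h2).
Qed.

Lemma mproj (k : 'cV[R]_D) l : measurable_fun setT (fun x => attn_proj (h x) k l 0).
Proof.
rewrite /attn_proj; under eq_fun do rewrite !mxE.
apply: measurable_funM; first exact: measurable_cst.
apply: measurable_sum => j.
apply: measurable_funM => //; exact: measurable_cst.
Qed.

Lemma msoftmax (k : 'cV[R]_D) l :
  measurable_fun setT (fun x => softmax (attn_proj (h x) k) l 0).
Proof.
rewrite (_ : (fun x => _) = fun x => expR (attn_proj (h x) k l 0) /
   \sum_(l' < L) expR (attn_proj (h x) k l' 0)); last first.
  by apply/funext => x; rewrite /softmax [LHS]mxE.
apply: measurable_funM.
  exact: (measurableT_comp (@measurable_expR R) (mproj k l)).
apply: minv.
  apply: measurable_sum => l'.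
  exact: (measurableT_comp (@measurable_expR R) (mproj k l')).
move=> x; apply: (lt_le_trans (expR_gt0 (attn_proj (h x) k l 0))).
rewrite (bigD1 l) //= lerDl; apply: sumr_ge0 => i _; exact: expR_ge0.
Qed.

Lemma mattn (k v : 'cV[R]_D) : measurable_fun setT (fun x => attn k v (h x)).
Proof.
rewrite /attn; apply: measurable_sum => l.
apply: measurable_funM; [exact: msoftmax|exact: mproj].
Qed.

Lemma mgauss : measurable_fun setT (fun x => gauss_mat (h x)).
Proof.
rewrite /gauss_mat; apply: measurable_prod => i _.
apply: measurable_prod => j _.
exact: (measurableT_comp (measurable_normal_pdf 0 1) (hm i j)).
Qed.

Lemma mgfun (G : 'cV[R]_L -> R) (k : 'cV[R]_D) :
  measurable_fun [set: L.-tuple R] (fun t => G (\col_(i < L) tnth t i)) ->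
  measurable_fun setT (fun x => G (attn_proj (h x) k)).
Proof.
move=> mG.
have mt : measurable_fun [set: T] (fun x => [tuple attn_proj (h x) k i 0 | i < L]).
  apply/measurable_fun_tnthP => i.
  rewrite (_ : _ \o _ = (fun x => attn_proj (h x) k i 0)); first exact: mproj.
  by apply/funext => x /=; rewrite tnth_mktuple.
have := measurableT_comp mG mt.
congr measurable_fun; apply/funext => x /=; congr G.
by apply/matrixP => i j; rewrite mxE tnth_mktuple (ord1 j).
Qed.

End Meas.


Section Main.
Variable R : realType.
Variables (D Lbar : nat) (PL : nat -> R) (g : forall L : nat, 'I_L -> 'cV[R]_L -> R) (c : R).
Hypothesis hPL0 : forall L, (1 <= L <= Lbar)%N -> 0 <= PL L.
Hypothesis hgmeas : forall (L : nat) (eps : 'I_L),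
     measurable_fun [set: L.-tuple R] (fun t => g L eps (\col_(i < L) tnth t i)).
Hypothesis hg0 : forall (L : nat) (eps : 'I_L) (chi : 'cV[R]_L), 0 <= g L eps chi.
Hypothesis hgratio : forall (L : nat) (eps eps' : 'I_L) (chi : 'cV[R]_L),
     g L eps chi / g L eps' chi = expR (c * (chi eps 0 - chi eps' 0)).
Variables kstar vstar : 'cV[R]_D.

Local Notation jt := (joint PL g kstar).

Lemma gpos L eps chi : 0 < g L eps chi.
Proof.
rewrite lt_def hg0 andbT; apply/negP => /eqP g0.
have := hgratio L eps eps chi; rewrite g0 mul0r => /esym/eqP.
by rewrite gt_eqF ?expR_gt0.
Qed.

Lemma proj_scale L (X : 'M[R]_(L, D)) (a : R) k l :
  attn_proj X (a *: k) l 0 = a * attn_proj X k l 0.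
Proof. by rewrite /attn_proj -scalemxAr !mxE mulrCA. Qed.

Lemma softmaxE L (chi : 'cV[R]_L) l :
  softmax chi l 0 = expR (chi l 0) / \sum_(l' < L) expR (chi l' 0).
Proof. by rewrite /softmax mxE. Qed.

Lemma sumexp_gt0 L (f : 'I_L -> R) (l : 'I_L) : 0 < \sum_(l' < L) expR (f l').
Proof.
apply: (lt_le_trans (expR_gt0 (f l))).
rewrite (bigD1 l) //= lerDl; apply: sumr_ge0 => i _; exact: expR_ge0.
Qed.

Lemma soft_id L (X : 'M[R]_(L, D)) eps :
  softmax (attn_proj X (c *: kstar)) eps 0 * (\sum_(e < L) jt e X) = jt eps X.
Proof.
set chi := attn_proj X kstar.
have L0 : (0 < L)%N := leq_ltn_trans (leq0n _) (ltn_ord eps).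
have gE : forall e, g L e chi = g L eps chi * (expR (c * chi e 0) / expR (c * chi eps 0)).
  move=> e; have := hgratio L e eps chi.
  rewrite mulrBr expRD expRN => <-.
  by rewrite mulrC divfK // gt_eqF // gpos.
rewrite softmaxE proj_scale; under eq_bigr do rewrite proj_scale.
rewrite /joint /dens -/chi.
set S := \sum_(l' < L) expR (c * chi l' 0).
rewrite (eq_bigr (fun e => (PL L * L%:R^-1 * (g L eps chi * gauss_mat X) / expR (c * chi eps 0)) * expR (c * chi e 0))); last first.
  move=> e _; rewrite gE; field.
  by rewrite gt_eqF ?expR_gt0 //= pnatr_eq0 -lt0n L0.
rewrite -big_distrr /= -/S.
have hS : 0 < S by rewrite /S; apply: (@sumexp_gt0 L (fun e => c * chi e 0) eps).
field.
by rewrite pnatr_eq0 -lt0n L0 !gt_eqF ?expR_gt0.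
Qed.

Lemma hm L (X : 'M[R]_(L, D)) :
  \sum_(e < L) jt e X * target e vstar X = (\sum_(e < L) jt e X) * attn (c *: kstar) vstar X.
Proof.
rewrite /attn mulr_sumr; apply: eq_bigr => e _.
by rewrite -[in LHS](@soft_id L X e) /target; ring.
Qed.

Lemma decomp L (X : 'M[R]_(L, D)) (a : R) :
  \sum_(e < L) jt e X * (target e vstar X - a) ^+ 2 =
  \sum_(e < L) jt e X * (target e vstar X - attn (c *: kstar) vstar X) ^+ 2 +
  (\sum_(e < L) jt e X) * (attn (c *: kstar) vstar X - a) ^+ 2.
Proof.
set m := attn (c *: kstar) vstar X.
have E : forall e : 'I_L, jt e X * (target e vstar X - a) ^+ 2 =
  jt e X * (target e vstar X - m) ^+ 2 +
  ((2 * (m - a)) * (jt e X * target e vstar X) + (a ^+ 2 - m ^+ 2) * jt e X).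
  by move=> e; ring.
rewrite (eq_bigr _ (fun e _ => E e)) big_split /= big_split /=.
have h1 : \sum_(e < L) 2 * (m - a) * (jt e X * target e vstar X) =
  2 * (m - a) * \sum_(e < L) jt e X * target e vstar X by rewrite mulr_sumr.
have h2 : \sum_(e < L) (a ^+ 2 - m ^+ 2) * jt e X =
  (a ^+ 2 - m ^+ 2) * \sum_(e < L) jt e X by rewrite mulr_sumr.
rewrite h1 h2 hm -/m.
congr (_ + _); ring.
Qed.

Lemma gauss_ge0 L (X : 'M[R]_(L, D)) : 0 <= gauss_mat X.
Proof.
by apply: prodr_ge0 => i _; apply: prodr_ge0 => j _; exact: normal_pdf_ge0.
Qed.

Lemma jt_ge0 L (X : 'M[R]_(L, D)) e : (1 <= L <= Lbar)%N -> 0 <= jt e X.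
Proof.
move=> hL; rewrite /joint /dens.
apply: mulr_ge0; first by apply: mulr_ge0; [exact: hPL0|rewrite invr_ge0].
apply: mulr_ge0; [exact: hg0|exact: gauss_ge0].
Qed.

Lemma bayes_pt L (X : 'M[R]_(L, D)) eps : (1 <= L <= Lbar)%N ->
  jt eps X * (target eps vstar X - cond_exp_y PL g kstar vstar X) ^+ 2 =
  jt eps X * (target eps vstar X - attn (c *: kstar) vstar X) ^+ 2.
Proof.
move=> hL.
have [W0|W0] := eqVneq (\sum_(e < L) jt e X) 0.
  have -> : jt eps X = 0.
    by apply: (psumr_eq0P _ W0) => // i _; exact: jt_ge0.
  by rewrite !mul0r.
congr (_ * (_ - _) ^+ 2).
rewrite /cond_exp_y.
under eq_bigr do rewrite mulrAC.
by rewrite -mulr_suml hm mulrAC divff // mul1r.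
Qed.


Local Notation Mv L v := (\matrix_(i < L, j < D) (v : nat -> R) (i * D + j)%N).

Lemma hmat L (i : 'I_L) (j : 'I_D) : measurable_fun [set: (L * D).-tuple R] (fun s => (Mv L (@ext R _ s)) i j).
Proof.
have lt : (i * D + j < L * D)%N.
  apply: (@leq_trans (i.+1 * D)); first by rewrite mulSn addnC ltn_add2r ltn_ord.
  by rewrite leq_mul2r ltn_ord orbT.
rewrite (_ : (fun s => _) = fun s => tnth s (Ordinal lt)); first exact: measurable_tnth.
by apply/funext => s; rewrite mxE /ext /= lt (tnth_nth 0).
Qed.

Lemma mjt L e : measurable_fun setT (fun s : (L * D).-tuple R => jt e (Mv L (@ext R _ s))).
Proof.
rewrite /joint /dens.
apply: measurable_funM; first exact: measurable_cst.
apply: measurable_funM.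
  exact: (@mgfun R L D _ _ (fun s => Mv L (@ext R _ s)) (@hmat L) (g L e) kstar (hgmeas L e)).
exact: (@mgauss R L D _ _ (fun s => Mv L (@ext R _ s)) (@hmat L)).
Qed.

Lemma mterm L e k v : measurable_fun setT (fun s : (L * D).-tuple R =>
  jt e (Mv L (@ext R _ s)) * (target e vstar (Mv L (@ext R _ s)) - attn k v (Mv L (@ext R _ s))) ^+ 2).
Proof.
apply: measurable_funM; first exact: mjt.
apply: measurable_funX; apply: measurable_funB.
  exact: (@mproj R L D _ _ (fun s => Mv L (@ext R _ s)) (@hmat L) vstar e).
exact: (@mattn R L D _ _ (fun s => Mv L (@ext R _ s)) (@hmat L) k v).
Qed.

Lemma sum_mat L (H : 'I_L -> 'M[R]_(L, D) -> R) :
  (forall e X, 0 <= jt e X * H e X) ->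
  (forall e, measurable_fun setT (fun s : (L * D).-tuple R => jt e (Mv L (@ext R _ s)) * H e (Mv L (@ext R _ s)))) ->
  (\sum_(e < L) mat_int (fun X => (jt e X * H e X)%:E) =
  mat_int (fun X => (\sum_(e < L) jt e X * H e X)%:E))%E.
Proof.
move=> H0 mH; rewrite /mat_int; symmetry.
exact: (@iter_sum R (L * D) L (fun e w => jt e (Mv L w) * H e (Mv L w))).
Qed.

Lemma per_L L k v : (1 <= L <= Lbar)%N ->
  (\sum_(e < L) mat_int (fun X => (jt e X * (target e vstar X - attn (c *: kstar) vstar X) ^+ 2)%:E) <=
   \sum_(e < L) mat_int (fun X => (jt e X * (target e vstar X - attn k v X) ^+ 2)%:E))%E.
Proof.
move=> hL.
rewrite !sum_mat; first last.
- by move=> e; exact: mterm.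
- by move=> e X; apply: mulr_ge0; [exact: jt_ge0|exact: sqr_ge0].
- by move=> e; exact: mterm.
- by move=> e X; apply: mulr_ge0; [exact: jt_ge0|exact: sqr_ge0].
rewrite /mat_int.
rewrite [X in (_ <= X)%E](_ : _ = iter_int (L * D) (fun w =>
  ((\sum_(e < L) jt e (Mv L w) * (target e vstar (Mv L w) - attn (c *: kstar) vstar (Mv L w)) ^+ 2) +
   (\sum_(e < L) jt e (Mv L w)) * (attn (c *: kstar) vstar (Mv L w) - attn k v (Mv L w)) ^+ 2)%:E)); last first.
  by congr iter_int; apply/funext => w; rewrite decomp.
rewrite iter_add'.
- apply: leeDl; apply: iter_ge0 => w; rewrite lee_fin.
  by apply: mulr_ge0; [apply: sumr_ge0 => e _; exact: jt_ge0|exact: sqr_ge0].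
- move=> w; apply: sumr_ge0 => e _.
  by apply: mulr_ge0; [exact: jt_ge0|exact: sqr_ge0].
- move=> w; apply: mulr_ge0; [apply: sumr_ge0 => e _; exact: jt_ge0|exact: sqr_ge0].
- by apply: measurable_sum => e; exact: mterm.
- apply: measurable_funM; first by apply: measurable_sum => e; exact: mjt.
  apply: measurable_funX; apply: measurable_funB.
    exact: (@mattn R L D _ _ (fun s => Mv L (@ext R _ s)) (@hmat L) _ _).
  exact: (@mattn R L D _ _ (fun s => Mv L (@ext R _ s)) (@hmat L) k v).
Qed.

End Main.

Theorem proposition2 (R : realType) (D Lbar : nat) (PL : nat -> R)
  (g : forall L : nat, 'I_L -> 'cV[R]_L -> R) (c : R)
  (hD : (1 <= D)%N) (hLbar : (1 <= Lbar)%N)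
  (hPL0 : forall L, (1 <= L <= Lbar)%N -> 0 <= PL L)
  (hPL1 : \sum_(1 <= L < Lbar.+1) PL L = 1)
  (hgmeas : forall (L : nat) (eps : 'I_L),
     measurable_fun [set: L.-tuple R] (fun t => g L eps (\col_(i < L) tnth t i)))
  (hg0 : forall (L : nat) (eps : 'I_L) (chi : 'cV[R]_L), 0 <= g L eps chi)
  (hgdens : forall (k : 'cV[R]_D) (L : nat) (eps : 'I_L),
     mat_int (fun X : 'M[R]_(L, D) =>
       (g L eps (attn_proj X k) * gauss_mat X)%:E) = 1%E)
  (hc : 0 <= c)
  (hgratio : forall (L : nat) (eps eps' : 'I_L) (chi : 'cV[R]_L),
     g L eps chi / g L eps' chi = expR (c * (chi eps 0 - chi eps' 0)))
  (kstar vstar : 'cV[R]_D) :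
  exists k0 v0 : 'cV[R]_D,
    risk Lbar PL g kstar vstar k0 v0 = bayes_risk Lbar PL g kstar vstar /\
    (forall k v : 'cV[R]_D,
       (risk Lbar PL g kstar vstar k0 v0 <= risk Lbar PL g kstar vstar k v)%E).
Proof.
exists (c *: kstar), vstar; split.
- rewrite /risk /bayes_risk /expect; apply: eq_big_nat => L hL.
  apply: eq_bigr => eps _; congr mat_int; apply/funext => X.
  by rewrite (@bayes_pt R D Lbar PL g c hPL0 hg0 hgratio kstar vstar L X eps hL).
- move=> k v; rewrite /risk /expect big_nat_cond [in X in (_ <= X)%E]big_nat_cond.
  apply: lee_sum => L /andP[hL _].
  exact: (@per_L R D Lbar PL g c hPL0 hgmeas hg0 hgratio kstar vstar L k v hL).
Qed.
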